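(* Let $\mathcal{D}$ be a DCR graph and let $P$ be any process reachable from $\textsc{dcrpsi}(\mathcal{D})$ by a finite sequence of $\tau$-transitions in the unit context $\mathbf{1}$. Then every unguarded output prefix of $P$ (an output prefix not occurring underneath an input prefix, an output prefix, a $\mathbf{case}$ guard or a replication) has the form $\overline{m}\langle N\rangle.\mathbf{0}$ with the sent message $N$ equal to the frame $\mathcal{F}(P)$.
   Context: A DCR graph is a tuple $(E,M,\to\!\bullet,\bullet\!\to,\to\!\diamond,\to\!+,\to\!\%)$ where $E$ is a set of events (names from a nominal set), $M=(Ex',Re',In')$ is a triple of subsets of $E$ (the marking), and $\to\!\bullet,\bullet\!\to,\to\!\diamond,\to\!+,\to\!\%\subseteq E\times E$ are the condition, response, milestone, include and exclude relations. For a relation $\to$ write $e\!\to=\{f\mid e\to f\}$ and $\to\! e=\{f\mid f\to e\}$. dcrPsi instance: assertions are quadruples $(Ex,Re,In,G)$ with $Ex,Re,In\subseteq E$ and $G$ a natural number built from $0$ and successor $s(\cdot)$; terms are a distinguished channel name $m$ and assertions; conditions are triples $(Co,Mi,e)$ with $Co,Mi\subseteq E$, $e\in E$; channel equality is $=$; unit $\mathbf{1}=(\emptyset,\emptyset,\emptyset,0)$; composition: $(Ex,Re,In,G)\otimes(Ex',Re',In',G')$ equals the first argument if $G>G'$, the second if $G<G'$, and $(Ex\cup Ex',Re\cup Re',In\cup In',G)$ if $G=G'$; entailment: $(Ex,Re,In,G)\vdash(Co,Mi,e)$ iff $e\in In$, $In\cap Co\subseteq Ex$ and $In\cap Mi\cap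 Re=\emptyset$. Psi-calculus: processes $\mathbf{0}$, $(\!|\Psi|\!)$, $\overline{M}\langle N\rangle.P$, $\underline{M}(\lambda\tilde x)N.P$, $\mathbf{case}\ \tilde\varphi:\tilde P$, $P\mid Q$, $!P$. Frames: $\mathcal{F}((\!|\Psi|\!))=\Psi$, $\mathcal{F}(P\mid Q)=\mathcal{F}(P)\otimes\mathcal{F}(Q)$, frame of $\mathbf{0}$, prefixed, case and replicated processes is $\mathbf{1}$. Transitions $\Psi\triangleright P\xrightarrow{\alpha}P'$ are generated by: (Out) if $\Psi\vdash M\leftrightarrow K$ then $\Psi\triangleright\overline{M}\langle N\rangle.P\xrightarrow{\overline{K}N}P$; (In) if $\Psi\vdash M\leftrightarrow K$ then $\Psi\triangleright\underline{M}(\lambda\tilde y)N.P\xrightarrow{\underline{K}N[\tilde y:=\tilde L]}P[\tilde y:=\tilde L]$ for any terms $\tilde L$; (Case) if $\Psi\triangleright P_i\xrightarrow{\alpha}P'$ and $\Psi\vdash\varphi_i$ then $\Psi\triangleright\mathbf{case}\ \tilde\varphi:\tilde P\xrightarrow{\alpha}P'$; (Par) if $\Psi\otimes\mathcal{F}(Q)\triangleright P\xrightarrow{\alpha}P'$ then $\Psi\triangleright P\mid Q\xrightarrow{\alpha}P'\mid Q$, and symmetrically; (Rep) if $\Psi\triangleright P\mid !P\xrightarrow{\alpha}P'$ then $\Psi\triangleright !P\xrightarrow{\alpha}P'$; (Com) if $\mathcal{F}(P)=\Psi_P$, $\mathcal{F}(Q)=\Psi_Q$, $\Psi_Q\otimes\Psi\triangleright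 P\xrightarrow{\overline{M}N}P'$, $\Psi_P\otimes\Psi\triangleright Q\xrightarrow{\underline{K}N}Q'$ and $\Psi_Q\otimes\Psi_P\otimes\Psi\vdash M\leftrightarrow K$, then $\Psi\triangleright P\mid Q\xrightarrow{\tau}P'\mid Q'$, and symmetrically. Assertion processes and $\mathbf{0}$ have no transitions. Set-expressions in terms are identified with their values after substitution. Translation: $\textsc{dcrpsi}(\mathcal{D})=P_s\mid\big|_{e\in E}P_e$ with $P_s=(\!|(Ex',Re',In',0)|\!)\mid\overline{m}\langle(Ex',Re',In',0)\rangle.\mathbf{0}$ and $P_e=!\big(\mathbf{case}\ \varphi_e:\underline{m}(\lambda X_E,X_R,X_I,X_G)(X_E,X_R,X_I,X_G).(\overline{m}\langle U_e\rangle.\mathbf{0}\mid(\!|U_e|\!))\big)$, where $U_e=(X_E\cup\{e\},(X_R\setminus\{e\})\cup e\!\bullet\!\!\to,(X_I\setminus e\!\to\!\%)\cup e\!\to\!+,s(X_G))$ and $\varphi_e=(\to\!\bullet e,\to\!\diamond e,e)$. *)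

(* Defs.v *)
From Stdlib Require Lists.List.
From mathcomp Require Import all_boot.
Set Implicit Arguments.
Unset Strict Implicit.
Unset Printing Implicit Defensive.

Section DcrPsi.
Variable E : finType.

Record dcr := Dcr {
  mEx : {set E}; mRe : {set E}; mIn : {set E};
  rcond : rel E;
  rresp : rel E;
  rmile : rel E;
  rincl : rel E;
  rexcl : rel E
}.

Record assertion := Asrt { aEx : {set E}; aRe : {set E}; aIn : {set E}; aG : nat }.

Inductive term := TChan | TAss of assertion.

Record cond := Cond { cCo : {set E}; cMi : {set E}; cEv : E }.

Definition unit_a : assertion := Asrt set0 set0 set0 0.

Definition compose (p q : assertion) : assertion :=
  if aG q < aG p then p
  else if aG p < aG q then q
  else Asrt (aEx p :|: aEx q) (aRe p :|: aRe q) (aIn p :|: aIn q) (aG p).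

Definition entails (p : assertion) (c : cond) : Prop :=
  cEv c \in aIn p /\ (aIn p :&: cCo c) \subset aEx p /\
  aIn p :&: cMi c :&: aRe p = set0.

Definition chan_eq (_ : assertion) (M K : term) : Prop := M = K.

(* Input prefixes M(\lambda X_E,X_R,X_I,X_G)N.P are represented
   higher-order: the binder ranges over the values substituted for the bound
   tuple (a quadruple of three sets and a natural number, i.e. an assertion),
   [pat] gives the pattern N[~X := ~L] and [cont] the continuation P[~X := ~L]. *)
Inductive proc :=
| PNil
| PAss of assertion
| POut of term & term & proc
| PIn of term & (assertion -> term) & (assertion -> proc)
| PCase of seq (cond * proc)
| PPar of proc & proc
| PRep of proc.

Fixpoint frame (P : proc) : assertion :=
  match P with
  | PAss a => a
  | PPar P Q => compose (frame P) (frame Q)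
  | _ => unit_a
  end.

Inductive label := LOut of term & term | LIn of term & term | LTau.

Inductive trans : assertion -> proc -> label -> proc -> Prop :=
| TrOut Psi M K N P : chan_eq Psi M K -> trans Psi (POut M N P) (LOut K N) P
| TrIn Psi M K pat cont L : chan_eq Psi M K ->
    trans Psi (PIn M pat cont) (LIn K (pat L)) (cont L)
| TrCase Psi bs phi P a P' : Stdlib.Lists.List.In (phi, P) bs -> trans Psi P a P' ->
    entails Psi phi -> trans Psi (PCase bs) a P'
| TrParL Psi P Q a P' : trans (compose Psi (frame Q)) P a P' ->
    trans Psi (PPar P Q) a (PPar P' Q)
| TrParR Psi P Q a Q' : trans (compose Psi (frame P)) Q a Q' ->
    trans Psi (PPar P Q) a (PPar P Q')
| TrRep Psi P a P' : trans Psi (PPar P (PRep P)) a P' -> trans Psi (PRep P) a P'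
| TrComL Psi P Q M K N P' Q' :
    trans (compose (frame Q) Psi) P (LOut M N) P' ->
    trans (compose (frame P) Psi) Q (LIn K N) Q' ->
    chan_eq (compose (compose (frame Q) (frame P)) Psi) M K ->
    trans Psi (PPar P Q) LTau (PPar P' Q')
| TrComR Psi P Q M K N P' Q' :
    trans (compose (frame P) Psi) Q (LOut M N) Q' ->
    trans (compose (frame Q) Psi) P (LIn K N) P' ->
    chan_eq (compose (compose (frame P) (frame Q)) Psi) M K ->
    trans Psi (PPar P Q) LTau (PPar P' Q').

Inductive tau_reach : proc -> proc -> Prop :=
| TRrefl P : tau_reach P P
| TRstep P Q R : trans unit_a P LTau Q -> tau_reach Q R -> tau_reach P R.

Inductive unguarded_out : proc -> term -> term -> proc -> Prop :=
| UOhere M N Q : unguarded_out (POut M N Q) M N Q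
| UOparL P1 P2 M N Q : unguarded_out P1 M N Q -> unguarded_out (PPar P1 P2) M N Q
| UOparR P1 P2 M N Q : unguarded_out P2 M N Q -> unguarded_out (PPar P1 P2) M N Q.

Fixpoint bigpar (l : seq proc) : proc :=
  match l with
  | [::] => PNil
  | [:: P] => P
  | P :: l' => PPar P (bigpar l')
  end.

Section Translation.
Variable D : dcr.

Definition U (e : E) (X : assertion) : assertion :=
  Asrt (aEx X :|: [set e])
       ((aRe X :\ e) :|: [set f | rresp D e f])
       ((aIn X :\: [set f | rexcl D e f]) :|: [set f | rincl D e f])
       (aG X).+1.

Definition phi (e : E) : cond :=
  Cond [set f | rcond D f e] [set f | rmile D f e] e.

Definition init_a : assertion := Asrt (mEx D) (mRe D) (mIn D) 0.

Definition P_s : proc := PPar (PAss init_a) (POut TChan (TAss init_a) PNil).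

Definition P_e (e : E) : proc :=
  PRep (PCase [:: (phi e,
     PIn TChan (fun X => TAss X)
         (fun X => PPar (POut TChan (TAss (U e X)) PNil) (PAss (U e X))))]).

Definition dcrpsi : proc := PPar P_s (bigpar [seq P_e e | e <- enum E]).
End Translation.
End DcrPsi.

(* Main.v *)
Require Import Defs.
From mathcomp Require Import all_boot.
From mathcomp Require Import zify.

Section S.
Variable E : finType.
Variable D : dcr E.

Notation body e := (PCase [:: (phi D e, PIn (TChan E) (fun X => TAss X)
   (fun X => PPar (POut (TChan E) (TAss (U D e X)) (PNil E)) (PAss (U D e X))))]).

Inductive good : proc E -> Prop :=
| GNil : good (PNil E)
| GAss a : good (PAss a)
| GOut M N : good (POut M N (PNil E))
| GBody e : good (body e)
| GRep e : good (PRep (body e))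
| GPar A B : good A -> good B -> good (PPar A B).
Arguments GPar {A B}.

Fixpoint outs (P : proc E) : seq (term E * term E * proc E) :=
  match P with
  | POut M N Q => [:: (M, N, Q)]
  | PPar A B => outs A ++ outs B
  | _ => [::]
  end.

Lemma compose_G (p q : assertion E) : aG (compose p q) = maxn (aG p) (aG q).
Proof. rewrite /compose; case: ifP => h1; [|case: ifP => h2]; simpl; lia. Qed.

Lemma compose_big (p q : assertion E) : aG p < aG q -> compose p q = q.
Proof. move=> h; rewrite /compose; case: ifP => h1; first lia. by rewrite h. Qed.

Lemma compose_small (p q : assertion E) : aG q < aG p -> compose p q = p.
Proof. by move=> h; rewrite /compose h. Qed.

Lemma compose_unit (p : assertion E) : compose p (unit_a E) = p.
Proof.
case: p => ex re inn g; rewrite /compose /=; case: g => [|g] //=.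
by rewrite !setU0.
Qed.

Lemma cat_nil_eq (T : Type) (s1 s2 : seq T) : s1 ++ s2 = [::] -> s1 = [::] /\ s2 = [::].
Proof. by case: s1. Qed.

Lemma out_lem Psi (P : proc E) l P' : trans Psi P l P' -> good P -> forall M N, l = LOut M N ->
  exists l1 l2, outs P = l1 ++ (M, N, PNil E) :: l2 /\ outs P' = l1 ++ l2 /\
     frame P' = frame P /\ good P'.
Proof.
induction 1; intros G M0 N0 El; try discriminate.
- inversion G; subst. rewrite /chan_eq in H; subst. case: El => <- <-.
  exists [::], [::]; split; [done|split; [done|split; [done|constructor]]].
- inversion G; subst. case: H => [[_ <-]|[]] in H0.
  inversion H0; subst; discriminate.
- inversion G; subst. have [l1 [l2 [E1 [E2 [F1 G1]]]]] := IHtrans ltac:(assumption) _ _ (erefl _).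
  exists l1, (l2 ++ outs Q); rewrite /= E1 E2 F1 -!catA; split; [done|split;[done|split;[done|]]].
  by constructor.
- inversion G; subst. have [l1 [l2 [E1 [E2 [F1 G1]]]]] := IHtrans ltac:(assumption) _ _ (erefl _).
  exists (outs P ++ l1), l2; rewrite /= E1 E2 F1 !catA; split; [done|split;[done|split;[done|]]].
  by constructor.
- inversion G; subst.
  have [l1 [l2 [E1 _]]] := IHtrans (GPar (GBody e) (GRep e)) _ _ (erefl _).
  by case: l1 E1.
Qed.
Arguments out_lem {Psi P l P'}.

Lemma in_lem Psi (P : proc E) l P' : trans Psi P l P' -> good P -> forall K N, l = LIn K N ->
  exists e X l1 l2, N = TAss X /\ outs P = l1 ++ l2 /\
    outs P' = l1 ++ (TChan E, TAss (U D e X), PNil E) :: l2 /\ good P' /\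
    (aG (frame P) <= aG X -> frame P' = U D e X).
Proof.
induction 1; intros G K0 N0 El; try discriminate.
- inversion G.
- inversion G; subst. case: H => [[_ <-]|[]] in H0.
  inversion H0; subst.
  exists e, L, [::], [::]; split; [done|split;[done|split;[done|split]]].
  + by constructor; constructor.
  + move=> _ /=. by apply: compose_big.
- inversion G; subst.
  have [e [X [l1 [l2 [NX [E1 [E2 [G1 F1]]]]]]]] := IHtrans ltac:(assumption) _ _ (erefl _).
  exists e, X, l1, (l2 ++ outs Q); rewrite /= E1 E2 -!catA.
  split; [done|split;[done|split;[done|split]]]; first by constructor.
  rewrite compose_G => h. rewrite F1; last lia.
  apply: compose_small => /=; lia.
- inversion G; subst.
  have [e [X [l1 [l2 [NX [E1 [E2 [G1 F1]]]]]]]] := IHtrans ltac:(assumption) _ _ (erefl _).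
  exists e, X, (outs P ++ l1), l2; rewrite /= E1 E2 !catA.
  split; [done|split;[done|split;[done|split]]]; first by constructor.
  rewrite compose_G => h. rewrite F1; last lia.
  apply: compose_big => /=; lia.
- inversion G; subst.
  have [e' [X [l1 [l2 [NX [E1 [E2 [G1 F1]]]]]]]] := IHtrans (GPar (GBody e) (GRep e)) _ _ (erefl _).
  exists e', X, l1, l2; split; [done|split;[done|split;[done|split;[done|]]]].
  move=> _; apply: F1 => /=. lia.
Qed.
Arguments in_lem {Psi P l P'}.

Lemma tau_out Psi (P : proc E) l P' : trans Psi P l P' -> good P -> l = LTau E -> outs P <> [::].
Proof.
induction 1; intros G El; try discriminate.
- inversion G; subst. case: H => [[_ <-]|[]] in H0.
  inversion H0; subst; discriminate.
- inversion G; subst. have := IHtrans ltac:(assumption) (erefl _). rewrite /=. by case: (outs P).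
- inversion G; subst. have := IHtrans ltac:(assumption) (erefl _). rewrite /=. case: (outs P) => //=.
- inversion G; subst. by have := IHtrans (GPar (GBody e) (GRep e)) (erefl _).
- inversion G; subst.
  have [l1 [l2 [E1 _]]] := out_lem H ltac:(assumption) _ _ (erefl _).
  by rewrite /= E1; clear E1; case: l1.
- inversion G; subst.
  have [l1 [l2 [E1 _]]] := out_lem H ltac:(assumption) _ _ (erefl _).
  by rewrite /= E1; clear E1; case: (outs P); case: l1.
Qed.
Arguments tau_out {Psi P l P'}.


Lemma split1 (T : Type) (a b c d : seq T) o x :
  (a ++ b) ++ (c ++ o :: d) = [:: x] \/ (c ++ o :: d) ++ (a ++ b) = [:: x] ->
  a = [::] /\ b = [::] /\ c = [::] /\ d = [::] /\ o = x.
Proof.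
move=> H.
have h : size a + size b + size c + size d = 0.
  case: H => /(congr1 size); rewrite !size_cat /=; lia.
have a0 : a = [::] by apply: size0nil; lia.
have b0 : b = [::] by apply: size0nil; lia.
have c0 : c = [::] by apply: size0nil; lia.
have d0 : d = [::] by apply: size0nil; lia.
subst; split; [done|split;[done|split;[done|split;[done|]]]].
by case: H => /= [[]|[]].
Qed.
Arguments split1 {T a b c d o x}.

Lemma tau_lem Psi (P : proc E) l P' : trans Psi P l P' -> good P -> l = LTau E ->
  forall F, outs P = [:: (TChan E, TAss F, PNil E)] -> aG (frame P) <= aG F ->
  exists e, good P' /\ outs P' = [:: (TChan E, TAss (U D e F), PNil E)] /\
    frame P' = U D e F.
Proof.
induction 1; intros G El F Eo Fl; try discriminate.
- inversion G; subst. move: Eo Fl => /=. rewrite compose_G => Eo Fl.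
  case EP: (outs P) Eo => [|y s] /= Eo.
  + by case: (tau_out H ltac:(assumption) (erefl _)).
  + case: Eo => Ey /cat_nil_eq [s0 q0]; subst.
    have [e [G1 [E1 F1]]] := IHtrans ltac:(assumption) (erefl _) F EP ltac:(lia).
    exists e; rewrite /= E1 q0 F1; split; [by constructor|split;[done|]].
    apply: compose_small => /=; lia.
- inversion G; subst. move: Eo Fl => /=. rewrite compose_G => Eo Fl.
  case EP: (outs P) Eo => [|y s] /= Eo.
  + have [e [G1 [E1 F1]]] := IHtrans ltac:(assumption) (erefl _) F Eo ltac:(lia).
    exists e; rewrite /= E1 ?EP F1; split; [by constructor|split;[done|]].
    apply: compose_big => /=; lia.
  + case: Eo => Ey /cat_nil_eq [s0 q0]; subst.
    by case: (tau_out H ltac:(assumption) (erefl _)).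
- inversion G; subst. move: Eo Fl => /=. rewrite compose_G => Eo Fl.
  have [l1 [l2 [E1 [E2 [F1 G1]]]]] := out_lem H ltac:(assumption) _ _ (erefl _).
  have [e [X [m1 [m2 [NX [E3 [E4 [G2 F2]]]]]]]] := in_lem H0 ltac:(assumption) _ _ (erefl _).
  move: Eo; rewrite E1 E3 => Eo.
  have [m1n [m2n [l1n [l2n Ey]]]] := split1 (or_intror Eo); subst.
  case: Ey => _ XF; subst.
  exists e; rewrite /= E2 E4 F1 F2; last lia.
  split; [by constructor|split;[done|]].
  apply: compose_big => /=; lia.
- inversion G; subst. move: Eo Fl => /=. rewrite compose_G => Eo Fl.
  have [l1 [l2 [E1 [E2 [F1 G1]]]]] := out_lem H ltac:(assumption) _ _ (erefl _).
  have [e [X [m1 [m2 [NX [E3 [E4 [G2 F2]]]]]]]] := in_lem H0 ltac:(assumption) _ _ (erefl _).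
  move: Eo; rewrite E1 E3 => Eo.
  have [m1n [m2n [l1n [l2n Ey]]]] := split1 (or_introl Eo); subst.
  case: Ey => _ XF; subst.
  exists e; rewrite /= E2 E4 F1 F2; last lia.
  split; [by constructor|split;[done|]].
  apply: compose_small => /=; lia.
Qed.
Arguments tau_lem {Psi P l P'}.


Lemma reach_inv (P Q : proc E) : tau_reach P Q -> good P ->
  outs P = [:: (TChan E, TAss (frame P), PNil E)] ->
  good Q /\ outs Q = [:: (TChan E, TAss (frame Q), PNil E)].
Proof.
induction 1 => G Eo; first by [].
have [e [G1 [E1 F1]]] := tau_lem H G (erefl _) _ Eo (leqnn _).
apply: IHtau_reach => //. by rewrite E1 F1.
Qed.

Lemma uo_in (P : proc E) M N Q : unguarded_out P M N Q -> List.In (M, N, Q) (outs P).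
Proof.
induction 1; first by left.
- by apply: List.in_or_app; left.
- by apply: List.in_or_app; right.
Qed.

Lemma bigpar_map (s : seq E) :
  good (bigpar [seq P_e D e | e <- s]) /\ outs (bigpar [seq P_e D e | e <- s]) = [::]
  /\ frame (bigpar [seq P_e D e | e <- s]) = unit_a E.
Proof.
elim: s => [|e s IH] /=; first by split; [constructor|].
case: s IH => [|e' s] IH /=; first by split; [exact: GRep|].
move: IH => /= [G1 [E1 F1]].
split; [by constructor; [exact: GRep|]|]. rewrite E1 F1. split; first by [].
by rewrite compose_unit.
Qed.

Lemma init_inv : good (dcrpsi D) /\
  outs (dcrpsi D) = [:: (TChan E, TAss (frame (dcrpsi D)), PNil E)].
Proof.
have [G1 [E1 F1]] := bigpar_map (enum E).
rewrite /dcrpsi /P_s /=. rewrite E1 F1 !compose_unit.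
split; last by []. by constructor; [constructor; constructor|].
Qed.
End S.

Theorem mainTheorem7 (E : finType) (D : dcr E) (P : proc E) :
  tau_reach (dcrpsi D) P ->
  forall (M N : term E) (Q : proc E), unguarded_out P M N Q ->
    M = TChan E /\ Q = PNil E /\ N = TAss (frame P).
Proof.
move=> R M N Q H.
have [G0 E0] := @init_inv E D.
have [_ E1] := @reach_inv E D _ _ R G0 E0.
have := @uo_in E _ _ _ _ H. rewrite E1. case=> [[<- <- <-]|[]]. by [].
Qed.
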